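(* Let $\Lambda$ be a countable index set, $\overline{a},\overline{r}$ sequences of positive reals indexed by $\Lambda$, $x^+\in\ell^1_{\overline{r}}$ and $t\in(0,1)$. The following are equivalent: (i) $x^+\in k_t$; (ii) there is $K>0$ such that $\|x^+-x\|_{\overline{r},1}+\|x^+\|_{\overline{r},1}-\|x\|_{\overline{r},1}\le K\|x^+-x\|_{\overline{a},2}^{\frac{2-2t}{2-t}}$ for all $x\in\ell^1_{\overline{r}}$; (iii) there is $K>0$ such that $\|x^+\|_{\overline{r},1}-\|x\|_{\overline{r},1}\le K\|x^+-x\|_{\overline{a},2}^{\frac{2-2t}{2-t}}$ for all $x\in\mathbb{R}^\Lambda$ with $|x_j|\le|x^+_j|$ for all $j\in\Lambda$. More precisely, (i) implies (ii) with $K=\left(2+4(2^{1-t}-1)^{-1}\right)\|x^+\|_{k_t}^{\frac{t}{2-t}}$, and if (iii) holds with constant $K$ then $\|x^+\|_{k_t}\le K^{\frac{2-t}{t}}$.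
   Context: For a sequence $\omega$ of positive reals and $p\in(0,\infty)$, $\|x\|_{\omega,p}=\left(\sum_{j\in\Lambda}\omega_j^p|x_j|^p\right)^{1/p}$ (possibly $+\infty$) and $\ell^p_\omega=\{x\in\mathbb{R}^\Lambda:\|x\|_{\omega,p}<\infty\}$. For $t\in(0,2)$, $k_t=\{x\in\mathbb{R}^\Lambda:\|x\|_{k_t}<\infty\}$ with $\|x\|_{k_t}=\sup_{\alpha>0}\alpha\left(\sum_{j\in\Lambda}\overline{a}_j^{-2}\overline{r}_j^2\mathbf{1}_{\{\overline{a}_j^{-2}\overline{r}_j\alpha<|x_j|\}}\right)^{1/t}$. *)

(* Defs.v *)
From HB Require Import structures.
From mathcomp Require Import all_boot all_order all_algebra.
From mathcomp Require Import all_classical all_reals all_analysis.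
Set Implicit Arguments. Unset Strict Implicit. Unset Printing Implicit Defensive.
Import Order.TTheory GRing.Theory Num.Theory.
Local Open Scope classical_set_scope.
Local Open Scope ring_scope.

Section defs.
Variables (R : realType) (L : countType).

Definition wnorm (w : L -> R) (p : R) (x : L -> R) : \bar R :=
  poweR (\esum_(j in [set: L]) ((w j `^ p * `|x j| `^ p)%:E)) p^-1.

Definition in_lp (w : L -> R) (p : R) (x : L -> R) : Prop :=
  (wnorm w p x < +oo)%E.

Definition ktnorm (a r : L -> R) (t : R) (x : L -> R) : \bar R :=
  ereal_sup [set (alpha%:E *
      poweR (\esum_(j in [set: L])
               ((a j ^- 2 * r j ^+ 2 *
                 (if a j ^- 2 * r j * alpha < `|x j| then 1 else 0))%:E))
            t^-1)%E | alpha in [set alpha : R | 0 < alpha]].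

Definition in_kt (a r : L -> R) (t : R) (x : L -> R) : Prop :=
  (ktnorm a r t x < +oo)%E.

End defs.

(* Main.v *)
Require Import Defs.
From HB Require Import structures.
From mathcomp Require Import all_boot all_order all_algebra.
From mathcomp Require Import all_classical all_reals all_analysis.
From mathcomp Require Import ring lra.
Import Order.TTheory GRing.Theory Num.Theory.
Local Open Scope classical_set_scope.
Local Open Scope ring_scope.


Lemma wnorm1E (R : realType) (L : countType) (r x : L -> R) :
  (forall j, 0 < r j) ->
  wnorm r 1 x = \esum_(j in [set: L]) (r j * `|x j|)%:E.
Proof.
move=> hr; rewrite /wnorm invr1 poweRe1; last first.
  by apply: esum_ge0 => j _; rewrite lee_fin mulr_ge0 // powR_ge0.
by apply: eq_esum => j _; rewrite !powRr1 // ltW.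
Qed.

Lemma wnorm2E (R : realType) (L : countType) (a x : L -> R) :
  (forall j, 0 < a j) ->
  wnorm a 2 x = poweR (\esum_(j in [set: L]) (a j ^+ 2 * `|x j| ^+ 2)%:E) 2^-1.
Proof.
move=> ha; rewrite /wnorm; congr poweR; apply: eq_esum => j _.
by rewrite -!powR_mulrn // ltW.
Qed.

Lemma esum_le_seq (R : realType) (L : choiceType) (f : L -> R) (c : R) :
  (forall s : seq L, uniq s -> \sum_(i <- s) f i <= c) ->
  (\esum_(j in [set: L]) (f j)%:E <= c%:E)%E.
Proof.
move=> H; apply: ge_ereal_sup => _ [X [fX _] <-].
rewrite fsumEFin // fsbig_finite // lee_fin; apply: H; exact: finmap.fset_uniq.
Qed.

Lemma sum_le_esum (R : realType) (L : choiceType) (f : L -> R) (s : seq L) :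
  uniq s -> 
  ((\sum_(i <- s) f i)%:E <= \esum_(j in [set: L]) (f j)%:E)%E.
Proof.
move=> us; apply: esum_ge; exists [set` s]; first by split; [exact: finite_seq|].
by rewrite fsumEFin ?finite_seq// -fsbig_seq.
Qed.

Lemma esumZ_le (R : realType) (L : choiceType) (f : L -> R) (c : R) :
  0 < c -> (forall j, 0 <= f j) ->
  (\esum_(j in [set: L]) (c * f j)%:E <= c%:E * \esum_(j in [set: L]) (f j)%:E)%E.
Proof.
move=> c0 f0; apply: ge_ereal_sup => _ [X [fX _] <-].
rewrite fsumEFin // fsbig_finite // -mulr_sumr EFinM lee_pmul2l ?lte_fin //.
rewrite -fsbig_finite // -fsumEFin //; apply: esum_ge; exists X => //.
Qed.

Lemma esumZ (R : realType) (L : choiceType) (f : L -> R) (c : R) :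
  0 < c -> (forall j, 0 <= f j) ->
  \esum_(j in [set: L]) (c * f j)%:E = (c%:E * \esum_(j in [set: L]) (f j)%:E)%E.
Proof.
move=> c0 f0; apply/eqP; rewrite eq_le esumZ_le //=.
have ic0 : 0 < c^-1 by rewrite invr_gt0.
have := @esumZ_le R L (fun j => c * f j) c^-1 ic0 (fun j => mulr_ge0 (ltW c0) (f0 j)).
under eq_esum do rewrite mulKf ?gt_eqF //.
move=> H; rewrite -(@lee_pmul2l _ c%:E) ?lte_fin // in H.
by rewrite muleA -EFinM mulfV ?gt_eqF // mul1e in H.
Qed.

Lemma exp_small (R : realType) (x y b c z : R) :
  0 < c -> 0 <= z -> (forall m : nat, x <= y + expR (b - m%:R * c) * z) -> x <= y.
Proof.
move=> c0 z0 H; rewrite leNgt; apply/negP => yx.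
set d := x - y.
have d0 : 0 < d by rewrite subr_gt0.
have q0 : 0 < d / (z + 1) by rewrite divr_gt0 // ltr_wpDl.
set y0 := (b - ln (d / (z + 1))) / c.
have [m hm] : exists m : nat, `|y0| < m%:R.
  by exists (Num.Def.archi_bound `|y0|); apply: archi_boundP.
have h1 : expR (b - m%:R * c) < d / (z + 1).
  rewrite -[X in _ < X](@lnK _ (d/(z+1))) ?posrE // ltr_expR.
  have : y0 < m%:R := le_lt_trans (ler_norm _) hm.
  rewrite /y0 ltr_pdivrMr // => h; lra.
have h2 : expR (b - m%:R * c) * z <= d / (z + 1) * z by rewrite ler_wpM2r // ltW.
have h3 : d / (z + 1) * z < d.
  rewrite mulrAC ltr_pdivrMr ?ltr_wpDl //; nra.
have := H m; rewrite /d in h2 h3; lra.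
Qed.

Lemma layer (R : realType) (L : Type) (s : seq L) (r w f : L -> R) (t u : R) :
  (forall j, 0 < r j) -> (forall j, 0 < w j) -> (forall j, 0 <= f j) -> 0 < t -> t < 1 ->
  (forall b, \sum_(i <- s) r i * w i * (if w i * expR b < f i then 1 else 0)
              <= expR (t * (u - b))) ->
  forall b, \sum_(i <- s) r i * f i * (if f i <= w i * expR b then 1 else 0)
     <= expR (t * ln 2 + t * u) / (1 - expR ((t - 1) * ln 2)) * expR ((1 - t) * b).
Proof.
move=> hr hw hf ht0 ht1 HN.
set l := ln (2:R).
have l0 : 0 < l by apply: ln_gt0; lra.
set x2 := expR ((t - 1) * l).
have x21 : x2 < 1 by rewrite /x2 expR_lt1; nra.
set C := expR (t * l + t * u) / (1 - x2).
have C0 : 0 <= C by rewrite divr_ge0 // ?expR_ge0 // subr_ge0 ltW.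
set Ws := \sum_(i <- s) r i * w i.
have Ws0 : 0 <= Ws by rewrite sumr_ge0 // => i _; rewrite mulr_ge0 // ltW.
set h := fun b => \sum_(i <- s) r i * f i * (if f i <= w i * expR b then 1 else 0).
have key : forall m : nat, forall b, h b <= C * expR ((1 - t) * b) + expR (b - m%:R * l) * Ws.
  elim => [|m IH] b.
    rewrite mul0r subr0 /h /Ws mulr_sumr.
    have E0 : 0 <= C * expR ((1 - t) * b) by rewrite mulr_ge0 // expR_ge0.
    apply: ler_wpDl E0 _.
    apply: ler_sum => i _; case: ifPn => hi.
      have := hr i; have := expR_gt0 b; nra.
    by rewrite mulr0 mulr_ge0 ?expR_ge0 // mulr_ge0 // ltW.
  have step : h b <= h (b - l) + expR b *
      \sum_(i <- s) r i * w i * (if w i * expR (b - l) < f i then 1 else 0).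
    rewrite /h mulr_sumr -big_split /=; apply: ler_sum => i _.
    have eb : expR (b - l) <= expR b by rewrite ler_expR; lra.
    have := hr i; have := hw i; have := hf i; have := expR_gt0 b; have := expR_gt0 (b - l).
    case: (leP (f i) (w i * expR (b - l))) => h1.
      have h2 : f i <= w i * expR b by apply: le_trans h1 _; rewrite ler_wpM2l // ltW.
      rewrite h2; nra.
    case: (leP (f i) (w i * expR b)) => h2.
      have h3 := ler_wpM2l (ltW (hr i)) h2.
      rewrite !mulr1 mulr0 add0r; move=> *; apply: (le_trans h3); rewrite mulrA mulrC; lra.
    rewrite mulr0 mulr1 add0r; move=> *; rewrite mulr_ge0 // ?expR_ge0 // mulr_ge0 // ltW //.
  have IH' := IH (b - l).
  have HN' : expR b * \sum_(i <- s) r i * w i * (if w i * expR (b - l) < f i then 1 else 0)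
     <= expR b * expR (t * (u - (b - l))) by rewrite ler_wpM2l ?expR_ge0.
  have e1 : expR (b - l - m%:R * l) = expR (b - m.+1%:R * l).
    by congr expR; rewrite -addn1 natrD; ring.
  have e2 : expR ((1 - t) * (b - l)) = expR ((1 - t) * b) * x2.
    by rewrite /x2 -expRD; congr expR; ring.
  have e3 : expR b * expR (t * (u - (b - l))) = expR ((1 - t) * b) * expR (t * l + t * u).
    by rewrite -!expRD; congr expR; ring.
  have e4 : C * (expR ((1 - t) * b) * x2) + expR ((1 - t) * b) * expR (t * l + t * u)
            = C * expR ((1 - t) * b).
    rewrite /C; field; rewrite subr_eq0; apply/eqP => hh; rewrite -hh in x21; lra.
  rewrite e1 e2 in IH'; rewrite e3 in HN'; lra.
move=> b; apply: (@exp_small _ _ _ b l Ws) => // m; exact: key.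
Qed.

Lemma Nbound (R : realType) (L : countType) (a r p : L -> R) (t D : R) :
  (forall j, 0 < a j) -> (forall j, 0 < r j) -> 0 < t -> 0 < D ->
  (ktnorm a r t p <= D%:E)%E ->
  forall s : seq L, uniq s -> forall b : R,
  \sum_(i <- s) a i ^- 2 * r i ^+ 2 * (if a i ^- 2 * r i * expR b < `|p i| then 1 else 0)
    <= expR (t * (ln D - b)).
Proof.
move=> ha hr ht0 hD hk s us b.
set f := fun i => a i ^- 2 * r i ^+ 2 * (if a i ^- 2 * r i * expR b < `|p i| then 1 else 0).
have f0 : forall i, 0 <= f i.
  move=> i; rewrite /f; apply: mulr_ge0; last by case: ifP.
  by rewrite mulr_ge0 ?invr_ge0 ?sqr_ge0.
have hsN := @sum_le_esum _ _ f s us.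
have hN : ((expR b)%:E * poweR (\esum_(j in [set: L]) (f j)%:E) t^-1 <= D%:E)%E.
  apply: le_trans hk; apply: ereal_sup_ubound; exists (expR b) => //; exact: expR_gt0.
have s0 : 0 <= \sum_(i <- s) f i by rewrite sumr_ge0.
move: hN hsN; case: (\esum_(j in [set: L]) (f j)%:E) => [n| |] hN hsN;
  last by move: hsN; rewrite leeNy_eq.
  2: by move: hN; rewrite poweRyr ?invr_neq0 ?gt_eqF // gt0_muley ?lte_fin ?expR_gt0 // leye_eq.
rewrite lee_fin in hsN; rewrite poweR_EFin lee_fin in hN.
have n0 : 0 <= n := le_trans s0 hsN.
case: (eqVneq n 0) => [n00|nn0].
  by rewrite n00 in hsN; apply: le_trans hsN (ltW (expR_gt0 _)).
have npos : 0 < n by rewrite lt_def nn0.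
rewrite /powR gt_eqF // -expRD -[X in _ <= X](@lnK _ D) ?posrE // ler_expR in hN.
apply: le_trans hsN _; rewrite -[X in X <= _](@lnK _ n) ?posrE // ler_expR.
have h1 : t^-1 * ln n <= ln D - b by lra.
have h := ler_wpM2l (ltW ht0) h1; rewrite mulrA mulfV ?gt_eqF // mul1r in h.
exact: h.
Qed.

Lemma core3 (R : realType) (L : Type) (s : seq L) (a r p x : L -> R) (t u q : R) :
  (forall j, 0 < a j) -> (forall j, 0 < r j) -> 0 < t -> t < 1 -> 0 < q ->
  (forall b, \sum_(i <- s) a i ^- 2 * r i ^+ 2 *
        (if a i ^- 2 * r i * expR b < `|p i| then 1 else 0) <= expR (t * (u - b))) ->
  \sum_(i <- s) a i ^+ 2 * `|p i - x i| ^+ 2 <= q ->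
  \sum_(i <- s) r i * (`|p i - x i| + `|p i| - `|x i|) <=
   (2 + 4 * (2 `^ (1 - t) - 1)^-1) * expR (t / (2 - t) * u)
     * expR ((2 - 2 * t) / (2 - t) * (2^-1 * ln q)).
Proof.
move=> ha hr ht0 ht1 hq HN HQ.
set v := 2^-1 * ln q.
set z := (2 * v - t * u) / (2 - t).
set lam := expR (v - t * (u - z) / 2).
have lam0 : 0 < lam := expR_gt0 _.
set Y := expR (t / (2 - t) * u) * expR ((2 - 2 * t) / (2 - t) * v).
have pw : forall i, r i * (`|p i - x i| + `|p i| - `|x i|) <=
    lam * (a i ^- 2 * r i ^+ 2 * (if a i ^- 2 * r i * expR z < `|p i| then 1 else 0))
  + lam^-1 * (a i ^+ 2 * `|p i - x i| ^+ 2)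
  + 2 * (r i * `|p i| * (if `|p i| <= a i ^- 2 * r i * expR z then 1 else 0)).
  move=> i.
  have ai := ha i; have ri := hr i.
  have T1 : 0 <= lam * (a i ^- 2 * r i ^+ 2).
    apply: mulr_ge0 (ltW lam0) _; apply: mulr_ge0; [rewrite invr_ge0 sqr_ge0 // | exact: sqr_ge0].
  have T2 : 0 <= lam^-1 * (a i ^+ 2 * `|p i - x i| ^+ 2).
    apply: mulr_ge0; [rewrite invr_ge0 ltW // | apply: mulr_ge0; exact: sqr_ge0].
  have T3 : 0 <= r i * `|p i| by apply: mulr_ge0 => //; exact: ltW.
  case: (leP (`|p i|) (a i ^- 2 * r i * expR z)) => hS.
    have h1 : `|p i - x i| - `|x i| <= `|p i| by have := ler_normB (p i) (x i); lra.
    have h2 := ler_wpM2l (ltW ri) h1.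
    rewrite !mulr0 !mulr1 add0r; lra.
  have h1 : `|p i| - `|x i| <= `|p i - x i| := lerB_dist _ _.
  have h2 := ler_wpM2l (ltW ri) h1.
  have amgm : 2 * (r i * `|p i - x i|) <=
      lam * (a i ^- 2 * r i ^+ 2) + lam^-1 * (a i ^+ 2 * `|p i - x i| ^+ 2).
    have sq : 0 <= (lam * (r i / a i) - a i * `|p i - x i|) ^+ 2 / lam.
      by rewrite divr_ge0 ?sqr_ge0 ?ltW.
    have id : (lam * (r i / a i) - a i * `|p i - x i|) ^+ 2 / lam =
      lam * (a i ^- 2 * r i ^+ 2) + lam^-1 * (a i ^+ 2 * `|p i - x i| ^+ 2)
      - 2 * (r i * `|p i - x i|).
      by field; rewrite !gt_eqF.
    lra.
  rewrite !mulr0 !mulr1 addr0; lra.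
have H1 := ler_sum s (fun i _ => pw i); specialize (H1 xpredT).
rewrite !big_split /= -!mulr_sumr in H1.
have HL := @layer R L s r (fun i => a i ^- 2 * r i) (fun i => `|p i|) t u hr.
have hw : forall j, 0 < a j ^- 2 * r j.
  by move=> j; apply: mulr_gt0 (hr j); rewrite invr_gt0 exprn_gt0.
have HL' := HL hw (fun j => normr_ge0 (p j)) ht0 ht1.
clear HL.
have HL : \sum_(i <- s) r i * `|p i| * (if `|p i| <= a i ^- 2 * r i * expR z then 1 else 0)
   <= expR (t * ln 2 + t * u) / (1 - expR ((t - 1) * ln 2)) * expR ((1 - t) * z).
  apply: HL' => b; under eq_bigr => i _ do rewrite mulrCA -expr2; exact: HN.
clear HL'.
have eP : 2 `^ (1 - t) = expR ((1 - t) * ln 2) by rewrite /powR gt_eqF.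
have l0 : 0 < ln (2:R) by apply: ln_gt0; lra.
have P1 : 1 < 2 `^ (1 - t) by rewrite eP expR_gt1 mulr_gt0 // subr_gt0.
have t2 : 2 - t != 0 by rewrite gt_eqF // subr_gt0; lra.
have e1 : lam * expR (t * (u - z)) = Y.
  by rewrite /lam /Y -!expRD; congr expR; rewrite /z /v; field.
have eq' : q = expR (2 * v) by rewrite /v mulrA mulfV ?mul1r ?lnK // ?posrE // pnatr_eq0.
have e2 : lam^-1 * q = Y.
  by rewrite eq' /lam /Y -expRN -!expRD; congr expR; rewrite /z; field.
have ex2 : expR ((t - 1) * ln 2) = (2 `^ (1 - t))^-1 by rewrite eP -expRN; congr expR; ring.
have num : expR (t * ln 2 + t * u) * expR ((1 - t) * z)
    = expR (ln 2) * expR (- ((1 - t) * ln 2)) * Y.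
  by rewrite /Y -!expRD; congr expR; rewrite /z; field.
rewrite lnK ?posrE // expRN -eP in num.
have e3 : expR (t * ln 2 + t * u) / (1 - expR ((t - 1) * ln 2)) * expR ((1 - t) * z)
    = 2 * (2 `^ (1 - t) - 1)^-1 * Y.
  rewrite mulrAC num ex2; field.
  by rewrite subr_eq0 !gt_eqF // (lt_trans ltr01).
have hA := ler_wpM2l (ltW lam0) (HN z); rewrite e1 in hA.
have ilam : 0 < lam^-1 by rewrite invr_gt0.
have hB := ler_wpM2l (ltW ilam) HQ; rewrite e2 in hB.
have hC := ler_wpM2l (ler0n R 2) HL; rewrite e3 in hC.
apply: le_trans H1 _.
have -> : (2 + 4 * (2 `^ (1 - t) - 1)^-1) * expR (t / (2 - t) * u)
     * expR ((2 - 2 * t) / (2 - t) * v) = Y + Y + 2 * (2 * (2 `^ (1 - t) - 1)^-1 * Y).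
  by rewrite /Y; ring.
lra.
Qed.

Lemma esum_fin (R : realType) (L : choiceType) (f : L -> R) :
  (forall j, 0 <= f j) -> (\esum_(j in [set: L]) (f j)%:E < +oo)%E ->
  exists c, \esum_(j in [set: L]) (f j)%:E = c%:E /\ 0 <= c.
Proof.
move=> f0; have := @esum_ge0 R L [set: L] (fun j => (f j)%:E) (fun j _ => f0 j).
case: (\esum_(j in [set: L]) (f j)%:E) => // c c0 _; by exists c.
Qed.

Lemma item4 (R : realType) (L : countType) (a r xp : L -> R) (t K : R) :
  (forall j, 0 < a j) -> (forall j, 0 < r j) -> in_lp r 1 xp -> 0 < t -> t < 1 -> 0 < K ->
  (forall x : L -> R, (forall j, `|x j| <= `|xp j|) ->
      (wnorm r 1 xp - wnorm r 1 x
       <= K%:E * poweR (wnorm a 2 (fun j => (xp j - x j)%R)) ((2 - 2 * t) / (2 - t)))%E) ->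
  (ktnorm a r t xp <= (K `^ ((2 - t) / t))%:E)%E.
Proof.
move=> ha hr hxp ht0 ht1 K0 H3.
apply: ge_ereal_sup => _ [al al0 <-].
set W := fun j => a j ^- 2 * r j ^+ 2 * (if a j ^- 2 * r j * al < `|xp j| then 1 else 0).
set x := fun j => if a j ^- 2 * r j * al < `|xp j|
                  then xp j * (1 - a j ^- 2 * r j * al / `|xp j|) else xp j.
have W0 : forall j, 0 <= W j.
  move=> j; rewrite /W; apply: mulr_ge0; last by case: ifP.
  by apply: mulr_ge0; [rewrite invr_ge0 sqr_ge0 | exact: sqr_ge0].
have key : forall j, [/\ `|x j| <= `|xp j|,
    r j * `|xp j| = r j * `|x j| + al * W j &
    a j ^+ 2 * `|xp j - x j| ^+ 2 = al ^+ 2 * W j].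
  move=> j; rewrite /x /W; have aj := ha j; have rj := hr j.
  have c0 : 0 < a j ^- 2 * r j * al.
    by apply: mulr_gt0 => //; apply: mulr_gt0 => //; rewrite invr_gt0 exprn_gt0.
  case: ifPn => hS; last first.
    split => //; first by rewrite !mulr0 addr0.
    by rewrite subrr normr0 expr0n /= !mulr0.
  have p0 : 0 < `|xp j| := lt_trans c0 hS.
  set c := a j ^- 2 * r j * al in c0 hS *.
  have e1 : `|xp j * (1 - c / `|xp j|)| = `|xp j| - c.
    rewrite normrM (@ger0_norm _ (1 - c / `|xp j|)); last by rewrite subr_ge0 ler_pdivrMr // mul1r ltW.
    by field; rewrite gt_eqF.
  have e2 : `|xp j - xp j * (1 - c / `|xp j|)| = c.
    have -> : xp j - xp j * (1 - c / `|xp j|) = xp j * (c / `|xp j|) by ring.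
    rewrite normrM (@ger0_norm _ (c / `|xp j|)) ?divr_ge0 ?ltW //.
    by field; rewrite gt_eqF.
  rewrite e1 e2; split.
  - lra.
  - by rewrite /c; ring.
  - by rewrite /c; field; rewrite gt_eqF.
have hx : forall j, `|x j| <= `|xp j| by move=> j; case: (key j).
have H := H3 x hx.
rewrite !wnorm1E // wnorm2E // in H.
rewrite /in_lp wnorm1E // in hxp.
have nx : forall j, [set: L] j -> (0 <= (r j * `|x j|)%:E)%E.
  by move=> j _; rewrite lee_fin; apply: mulr_ge0 => //; exact: ltW.
have nW : forall j, [set: L] j -> (0 <= (al * W j)%:E)%E.
  by move=> j _; rewrite lee_fin; apply: mulr_ge0 => //; exact: ltW.
have eB : \esum_(j in [set: L]) (r j * `|xp j|)%:E
   = (\esum_(j in [set: L]) (r j * `|x j|)%:E + al%:E * \esum_(j in [set: L]) (W j)%:E)%E.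
  rewrite -esumZ // -esumD //; apply: eq_esum => j _; rewrite -EFinD.
  by case: (key j) => _ -> _.
have eQ : \esum_(j in [set: L]) (a j ^+ 2 * `|xp j - x j| ^+ 2)%:E
    = ((al ^+ 2)%:E * \esum_(j in [set: L]) (W j)%:E)%E.
  rewrite -esumZ ?exprn_gt0 //; apply: eq_esum => j _.
  by case: (key j) => _ _ ->.
rewrite eB in hxp H; rewrite eQ in H.
have N0 : (0 <= \esum_(j in [set: L]) (W j)%:E)%E.
  by apply: esum_ge0 => j _; rewrite lee_fin.
have hC : (\esum_(j in [set: L]) (r j * `|x j|)%:E < +oo)%E.
  apply: le_lt_trans hxp; apply: leeDl; apply: mule_ge0 => //; rewrite lee_fin ltW //.
have [c [ec c0]] := @esum_fin _ _ _ (fun j => mulr_ge0 (ltW (hr j)) (normr_ge0 (x j))) hC.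
rewrite ec in hxp H.
move: N0 hxp H; case: (\esum_(j in [set: L]) (W j)%:E) => [n| |] // n0 hxp H; last first.
  by move: hxp; rewrite gt0_muley ?lte_fin // addey.
rewrite lee_fin in n0.
rewrite addeAC subee // add0e -!EFinM lee_fin in H.
rewrite -EFinM lee_fin.
case: (eqVneq n 0) => [->|nn0].
  by rewrite powR0 ?invr_neq0 ?gt_eqF // mulr0 powR_ge0.
have npos : 0 < n by rewrite lt_def nn0.
have t2 : 2 - t != 0 by rewrite gt_eqF // subr_gt0; lra.
have eL : al * n `^ t^-1 = expR (ln al + t^-1 * ln n).
  by rewrite expRD lnK ?posrE // /powR gt_eqF.
have eR : K `^ ((2 - t) / t) = expR ((2 - t) / t * ln K) by rewrite /powR gt_eqF.
have h1 : (al ^+ 2 * n) `^ 2^-1 = expR (2^-1 * (2 * ln al + ln n)).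
  rewrite /powR gt_eqF ?mulr_gt0 ?exprn_gt0 // lnM ?posrE ?exprn_gt0 // lnXn //.
  by congr expR; rewrite mulr_natl.
have eH : K * ((al ^+ 2 * n) `^ 2^-1) `^ ((2 - 2 * t) / (2 - t))
    = expR (ln K + (2 - 2 * t) / (2 - t) * (2^-1 * (2 * ln al + ln n))).
  rewrite h1 -expRM -{1}(@lnK _ K) ?posrE // -expRD; congr expR; ring.
have eAN : al * n = expR (ln al + ln n) by rewrite expRD !lnK ?posrE.
rewrite eH eAN ler_expR in H.
rewrite eL eR ler_expR.
have idt : ln al + t^-1 * ln n = (2 - t) / t *
   (ln al + ln n - (2 - 2 * t) / (2 - t) * (2^-1 * (2 * ln al + ln n))).
  by field; rewrite t2 gt_eqF.
rewrite idt; apply: ler_wpM2l.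
  by apply: divr_ge0; lra.
lra.
Qed.

Lemma item3 (R : realType) (L : countType) (a r xp : L -> R) (t : R) :
  (forall j, 0 < a j) -> (forall j, 0 < r j) -> in_lp r 1 xp -> 0 < t -> t < 1 ->
  in_kt a r t xp ->
  forall x : L -> R, in_lp r 1 x ->
      (wnorm r 1 (fun j => (xp j - x j)%R) + wnorm r 1 xp - wnorm r 1 x
       <= ((2 + 4 * (2 `^ (1 - t) - 1)^-1) * fine (ktnorm a r t xp) `^ (t / (2 - t)))%:E
          * poweR (wnorm a 2 (fun j => (xp j - x j)%R)) ((2 - 2 * t) / (2 - t)))%E.
Proof.
move=> ha hr hxp ht0 ht1 hkt x hx.
rewrite /in_lp !wnorm1E // in hxp hx; rewrite !wnorm1E // wnorm2E //.
have l0 : 0 < ln (2:R) by apply: ln_gt0; lra.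
have P1 : 1 < 2 `^ (1 - t).
  by rewrite /powR gt_eqF // expR_gt1 mulr_gt0 // subr_gt0.
have Kc0 : 0 < 2 + 4 * (2 `^ (1 - t) - 1)^-1.
  by apply: ltr_wpDr; [apply: mulr_ge0 => //; rewrite invr_ge0 subr_ge0 ltW | ].
have R0 : (0 <= ((2 + 4 * (2 `^ (1 - t) - 1)^-1) * fine (ktnorm a r t xp) `^ (t / (2 - t)))%:E
          * poweR (poweR (\esum_(j in [set: L]) (a j ^+ 2 * `|xp j - x j| ^+ 2)%:E) 2^-1)
                  ((2 - 2 * t) / (2 - t)))%E.
  by apply: mule_ge0; [rewrite lee_fin mulr_ge0 ?powR_ge0 ?ltW | exact: poweR_ge0].
have nr : forall (y : L -> R) j, [set: L] j -> (0 <= (r j * `|y j|)%:E)%E.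
  by move=> y j _; rewrite lee_fin; apply: mulr_ge0 => //; exact: ltW.
have [b [eb b0]] := @esum_fin _ _ _ (fun j => mulr_ge0 (ltW (hr j)) (normr_ge0 (xp j))) hxp.
have [c [ec c0]] := @esum_fin _ _ _ (fun j => mulr_ge0 (ltW (hr j)) (normr_ge0 (x j))) hx.
have [[j0 hj0] | allz] := pselect (exists j, xp j != 0); last first.
  have z : forall j, xp j = 0.
    by move=> j; apply/eqP/negP => /negP h; apply: allz; exists j.
  have -> : \esum_(j in [set: L]) (r j * `|xp j - x j|)%:E = c%:E.
    by rewrite -ec; apply: eq_esum => j _; rewrite z sub0r normrN.
  have -> : \esum_(j in [set: L]) (r j * `|xp j|)%:E = 0%E.
    by apply: esum1 => j _; rewrite z normr0 mulr0.
  by rewrite ec adde0 subee.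
have w0 : 0 < a j0 ^- 2 * r j0 by apply: mulr_gt0 (hr j0); rewrite invr_gt0 exprn_gt0.
have pj0 : 0 < `|xp j0| by rewrite normr_gt0.
pose al0 := `|xp j0| / (2 * (a j0 ^- 2 * r j0)).
have al00 : 0 < al0 by rewrite divr_gt0 // mulr_gt0.
have hS : a j0 ^- 2 * r j0 * al0 < `|xp j0|.
  have -> : a j0 ^- 2 * r j0 * al0 = `|xp j0| / 2.
    by rewrite /al0; field; rewrite !gt_eqF // ?invr_gt0 ?exprn_gt0.
  lra.
have kt0 : (0 < ktnorm a r t xp)%E.
  have hk1 : (al0%:E * poweR (\esum_(j in [set: L]) ((a j ^- 2 * r j ^+ 2 *
                 (if a j ^- 2 * r j * al0 < `|xp j| then 1 else 0))%:E)) t^-1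
              <= ktnorm a r t xp)%E.
    by apply: ereal_sup_ubound; exists al0.
  apply: lt_le_trans hk1; apply: mule_gt0; first by rewrite lte_fin.
  apply: poweR_gt0.
  have := @sum_le_esum _ _ (fun j => a j ^- 2 * r j ^+ 2 *
                 (if a j ^- 2 * r j * al0 < `|xp j| then 1 else 0)) [:: j0] isT.
  rewrite big_seq1 hS mulr1; apply: lt_le_trans.
  by rewrite lte_fin mulr_gt0 ?exprn_gt0 // invr_gt0 exprn_gt0.
have [D [eD D0]] : exists D, ktnorm a r t xp = D%:E /\ 0 < D.
  move: kt0 hkt; rewrite /in_kt; case: (ktnorm a r t xp) => // D D0 _.
  by exists D; split => //; rewrite -lte_fin.
have hk : (ktnorm a r t xp <= D%:E)%E by rewrite eD.
have HN := @Nbound R L a r xp t D ha hr ht0 D0 hk.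
rewrite eD /= in R0 *.
have Q0 : (0 <= \esum_(j in [set: L]) (a j ^+ 2 * `|xp j - x j| ^+ 2)%:E)%E.
  by apply: esum_ge0 => j _; rewrite lee_fin mulr_ge0 ?sqr_ge0.
have KD0 : 0 < (2 + 4 * (2 `^ (1 - t) - 1)^-1) * D `^ (t / (2 - t)).
  by rewrite mulr_gt0 // powR_gt0.
have e0 : (2 - 2 * t) / (2 - t) != 0.
  have h1 : 0 < 2 - 2 * t by lra.
  have h2 : 0 < 2 - t by lra.
  by rewrite gt_eqF // divr_gt0.
move: Q0 R0; case eQ : (\esum_(j in [set: L]) (a j ^+ 2 * `|xp j - x j| ^+ 2)%:E) => [q| |] // Q0 R0;
  last first.
  by rewrite poweRyr ?invr_neq0 // poweRyr // gt0_muley ?lte_fin // leey.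
rewrite lee_fin in Q0.
case: (eqVneq q 0) => [q00|qn0].
  have dz : forall j, xp j - x j = 0.
    move=> j; have := @sum_le_esum _ _ (fun j => a j ^+ 2 * `|xp j - x j| ^+ 2) [:: j] isT.
    rewrite big_seq1 eQ q00 lee_fin => h.
    have : a j ^+ 2 * `|xp j - x j| ^+ 2 = 0.
      by apply: le_anti; rewrite h mulr_ge0 ?sqr_ge0.
    move/eqP; rewrite mulf_eq0 expf_eq0 /= (gt_eqF (ha j)) /= expf_eq0 /= normr_eq0.
    by move/eqP.
  have -> : \esum_(j in [set: L]) (r j * `|xp j - x j|)%:E = 0%E.
    by apply: esum1 => j _; rewrite dz normr0 mulr0.
  have ecb : c = b.
    apply: EFin_inj; rewrite -ec -eb; apply: eq_esum => j _.
    by have := dz j; move/eqP; rewrite subr_eq0 => /eqP ->.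
  by rewrite eb ec ecb add0e subee.
have qpos : 0 < q by rewrite lt_def qn0.
have g0 : forall j, 0 <= r j * (`|xp j - x j| + `|xp j| - `|x j|).
  move=> j; apply: mulr_ge0; first exact: ltW.
  have := lerB_dist (x j) (xp j); rewrite distrC; lra.
have eAB : (\esum_(j in [set: L]) (r j * `|xp j - x j|)%:E
             + \esum_(j in [set: L]) (r j * `|xp j|)%:E
           = \esum_(j in [set: L]) (r j * (`|xp j - x j| + `|xp j| - `|x j|))%:E + c%:E)%E.
  rewrite -ec -esumD; [|exact: nr|exact: nr].
  rewrite -esumD; [|by move=> j _; rewrite lee_fin|exact: nr].
  by apply: eq_esum => j _; rewrite -!EFinD; congr EFin; ring.
rewrite eAB ec addeK //.
have eR : (((2 + 4 * (2 `^ (1 - t) - 1)^-1) * D `^ (t / (2 - t)))%:E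
           * poweR (poweR q%:E 2^-1) ((2 - 2 * t) / (2 - t)))%E
        = ((2 + 4 * (2 `^ (1 - t) - 1)^-1) * expR (t / (2 - t) * ln D)
           * expR ((2 - 2 * t) / (2 - t) * (2^-1 * ln q)))%:E.
  rewrite !poweR_EFin -EFinM; congr EFin; rewrite -!mulrA; congr (_ * _); congr (_ * _).
    by rewrite -{1}(@lnK _ D) ?posrE // -expRM; congr expR; ring.
  by rewrite -{1}(@lnK _ q) ?posrE // -!expRM; congr expR; ring.
rewrite eR; apply: esum_le_seq => s us.
apply: core3 => //.
  exact: HN s us.
by have := @sum_le_esum _ _ (fun j => a j ^+ 2 * `|xp j - x j| ^+ 2) s us; rewrite eQ lee_fin.
Qed.
Theorem lemma4p2 (R : realType) (L : countType) (a r : L -> R) (xp : L -> R) (t : R)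
  (ha : forall j, 0 < a j) (hr : forall j, 0 < r j)
  (hxp : in_lp r 1 xp) (ht0 : 0 < t) (ht1 : t < 1) :
  let e : R := (2 - 2 * t) / (2 - t) in
  let cond2 := fun K : R => forall x : L -> R, in_lp r 1 x ->
      (wnorm r 1 (fun j => (xp j - x j)%R) + wnorm r 1 xp - wnorm r 1 x
       <= K%:E * poweR (wnorm a 2 (fun j => (xp j - x j)%R)) e)%E in
  let cond3 := fun K : R => forall x : L -> R, (forall j, `|x j| <= `|xp j|) ->
      (wnorm r 1 xp - wnorm r 1 x
       <= K%:E * poweR (wnorm a 2 (fun j => (xp j - x j)%R)) e)%E in
  [/\ (in_kt a r t xp <-> exists2 K, 0 < K & cond2 K),
      ((exists2 K, 0 < K & cond2 K) <-> exists2 K, 0 < K & cond3 K),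
      (in_kt a r t xp ->
         cond2 ((2 + 4 * (2 `^ (1 - t) - 1)^-1) * fine (ktnorm a r t xp) `^ (t / (2 - t))))
    & (forall K, 0 < K -> cond3 K -> (ktnorm a r t xp <= (K `^ ((2 - t) / t))%:E)%E)].
Proof.
move=> e cond2 cond3.
have mono : forall K K', K <= K' -> cond2 K -> cond2 K'.
  move=> K K' le H x hx; apply: le_trans (H x hx) _.
  by apply: lee_wpmul2r; [exact: poweR_ge0 | rewrite lee_fin].
have h23 : forall K, cond2 K -> cond3 K.
  move=> K H x hx.
  have hxl : in_lp r 1 x.
    rewrite /in_lp in hxp *; apply: le_lt_trans hxp.
    rewrite !wnorm1E //; apply: le_esum => j _; rewrite lee_fin.
    by apply: ler_wpM2l; [exact: ltW | exact: hx].
  apply: le_trans (H x hxl).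
  rewrite -addeA; apply: lee_paddl => //.
  by rewrite wnorm1E //; apply: esum_ge0 => j _; rewrite lee_fin mulr_ge0 // ltW.
have K3 : in_kt a r t xp ->
    cond2 ((2 + 4 * (2 `^ (1 - t) - 1)^-1) * fine (ktnorm a r t xp) `^ (t / (2 - t))).
  by move=> hkt; exact: (@item3 _ _ _ _ _ _ ha hr hxp ht0 ht1 hkt).
have K4 : forall K, 0 < K -> cond3 K -> (ktnorm a r t xp <= (K `^ ((2 - t) / t))%:E)%E.
  by move=> K K0 H; exact: (@item4 _ _ _ _ _ _ _ ha hr hxp ht0 ht1 K0 H).
have l0 : 0 < ln (2:R) by apply: ln_gt0; lra.
have P1 : 1 < 2 `^ (1 - t).
  by rewrite /powR gt_eqF // expR_gt1 mulr_gt0 // subr_gt0.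
have K0pos : 0 <= (2 + 4 * (2 `^ (1 - t) - 1)^-1) * fine (ktnorm a r t xp) `^ (t / (2 - t)).
  apply: mulr_ge0; last exact: powR_ge0.
  by apply: addr_ge0 => //; apply: mulr_ge0 => //; rewrite invr_ge0 subr_ge0 ltW.
have i2 : in_kt a r t xp -> exists2 K, 0 < K & cond2 K.
  move=> hkt; exists ((2 + 4 * (2 `^ (1 - t) - 1)^-1) * fine (ktnorm a r t xp) `^ (t / (2 - t)) + 1).
    by apply: ltr_wpDl K0pos _.
  by apply: mono (K3 hkt); rewrite lerDl.
have i3 : (exists2 K, 0 < K & cond3 K) -> in_kt a r t xp.
  move=> [K K0 H]; rewrite /in_kt; apply: le_lt_trans (K4 K K0 H) _; exact: ltry.
split => //.
- split => //; move=> [K K0 H]; apply: i3; exists K => //; exact: h23.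
- split; first by move=> [K K0 H]; exists K => //; exact: h23.
  by move=> H; apply: i2; apply: i3.
Qed.
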